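(* Let $\alpha$ be a parameter. (i) Let $n_1>\dots>n_p\ge0$ and $m_1>\dots>m_q\ge0$ be integers, $r=p+q$, and $P(x)=e^{-qx}\mathrm{Wr}[L^{\alpha}_{n_1}(x),\dots,L^{\alpha}_{n_p}(x),e^xL^{\alpha}_{m_1}(-x),\dots,e^xL^{\alpha}_{m_q}(-x)]$. Let $s$ be the smallest positive integer with $n_i<r-1$ for all $i\ge s$ and $n_i\ge r-1$ for all $i<s$ ($s=p+1$ if none exists), and $s'$ the analogue for the $m_j$ ($s'=q+1$ if none exists). Then, up to sign, $$P(0)=\frac{\prod_{k=1}^{r}(\alpha+k)^{(r-k)}\prod_{i=1}^{s-1}(\alpha+r)^{(n_i-r+1)}\prod_{j=1}^{s'-1}(\alpha+r)^{(m_j-r+1)}\;\Delta(-n_p,\dots,-n_1,\alpha+1+m_1,\dots,\alpha+1+m_q)}{\prod_{i=s}^{p}(\alpha+1+n_i)^{(r-1-n_i)}\prod_{j=s'}^{q}(\alpha+1+m_j)^{(r-1-m_j)}\prod_{i=1}^{p}n_i!\prod_{j=1}^{q}m_j!}.$$ (ii) Let $n_1'>\dots>n_p'\ge0$ and $m_1'>\dots>m_q'\ge0$ be integers, $r=p+q$, and $Q(x)=e^{-px}x^{\alpha r}\mathrm{Wr}[x^{-\alpha}L^{-\alpha}_{m_1'}(x),\dots,x^{-\alpha}L^{-\alpha}_{m_q'}(x),e^xx^{-\alpha}L^{-\alpha}_{n_1'}(-x),\dots,e^xx^{-\alpha}L^{-\alpha}_{n_p'}(-x)]$. Let $\mathbf{s}$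 be the smallest positive integer with $n_i'<r-1$ for $i\ge\mathbf{s}$ and $n_i'\ge r-1$ for $i<\mathbf{s}$ ($\mathbf{s}=p+1$ if none exists), and $\mathbf{s}'$ the analogue for the $m_j'$ ($\mathbf{s}'=q+1$ if none exists). Then, up to sign, $$Q(0)=\frac{\prod_{k=1}^{r}(-\alpha+k)^{(r-k)}\prod_{j=1}^{\mathbf{s}'-1}(-\alpha+r)^{(m_j'-r+1)}\prod_{i=1}^{\mathbf{s}-1}(-\alpha+r)^{(n_i'-r+1)}\;\Delta(-m_q',\dots,-m_1',-\alpha+1+n_1',\dots,-\alpha+1+n_p')}{\prod_{j=\mathbf{s}'}^{q}(-\alpha+1+m_j')^{(r-1-m_j')}\prod_{i=\mathbf{s}}^{p}(-\alpha+1+n_i')^{(r-1-n_i')}\prod_{j=1}^{q}m_j'!\prod_{i=1}^{p}n_i'!}.$$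
   Context: $L_n^{\beta}$ is the classical Laguerre polynomial; $\mathrm{Wr}$ is the Wronskian; rising factorial $a^{(n)}=a(a+1)\cdots(a+n-1)$, $a^{(0)}=1$; Vandermonde $\Delta(a_1,\dots,a_k)=\prod_{i<j}(a_j-a_i)$. In the paper's notation $P=\Omega^{\alpha}_{\mu,\nu}$ is the generalized Laguerre polynomial for the canonical Maya diagrams $(\emptyset|n_1,\dots,n_p)$, $(\emptyset|m_1,\dots,m_q)$, and $Q=\Omega^{\alpha}_{\mu',\nu'}$ the one for the conjugate canonical diagrams $(n_1',\dots,n_p'|\emptyset)$, $(m_1',\dots,m_q'|\emptyset)$; $Q(0)$ means the value at $0$ of this polynomial. The paper ignores overall factors $(-1)^d$. *)

(* Defs.v *)
From HB Require Import structures.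
From mathcomp Require Import all_boot all_order all_algebra.
From mathcomp Require Import all_classical all_reals all_analysis.
Set Implicit Arguments. Unset Strict Implicit. Unset Printing Implicit Defensive.
Import Order.TTheory GRing.Theory Num.Theory.
Local Open Scope ring_scope.

Section Defs.
Variable R : realType.

Definition rfact (a : R) (n : nat) : R := \prod_(i < n) (a + i%:R).

Definition vdm (s : seq R) : R :=
  \prod_(i < size s) \prod_(j < size s | (i < j)%N) (s`_j - s`_i).

(* classical Laguerre polynomial
   L_n^a(x) = sum_{k=0}^n (-1)^k binom(n+a, n-k) x^k / k!,
   with binom(n+a, n-k) = (a+k+1)^(n-k) / (n-k)! *)
Definition laguerre (n : nat) (a : R) : {poly R} :=
  \poly_(k < n.+1)
    ((-1) ^+ k * rfact (a + k.+1%:R) (n - k) / ((n - k)`!%:R * k`!%:R)).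

Definition wronskian (fs : seq (R -> R)) (x : R) : R :=
  \det (\matrix_(i < size fs, j < size fs)
          (derive1n i (nth (fun=> 0) fs j)) x).

Definition wrP (a : R) (ns ms : seq nat) (x : R) : R :=
  expR (- ((size ms)%:R * x)) *
  wronskian ([seq (fun y : R => (laguerre n a).[y]) | n <- ns] ++
             [seq (fun y : R => expR y * (laguerre m a).[- y]) | m <- ms]) x.

(* Q(x) = e^{-px} x^{a r} Wr[x^{-a} L^{-a}_{m'_1}(x),...,x^{-a} L^{-a}_{m'_q}(x),
                          e^x x^{-a} L^{-a}_{n'_1}(-x),..., e^x x^{-a} L^{-a}_{n'_p}(-x)]
   (meaningful for x > 0) *)
Definition wrQ (a : R) (ns' ms' : seq nat) (x : R) : R :=
  expR (- ((size ns')%:R * x)) * powR x (a * (size ns' + size ms')%:R) *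
  wronskian ([seq (fun y : R => powR y (- a) * (laguerre m (- a)).[y]) | m <- ms'] ++
             [seq (fun y : R => expR y * powR y (- a) * (laguerre n (- a)).[- y])
               | n <- ns']) x.

(* the index s (1-based): smallest positive integer such that the entries of
   index >= s are < r-1 and those of index < s are >= r-1 (for a strictly
   decreasing sequence this is one plus the position of the first entry < r-1,
   and size+1 if there is none). *)
Definition sidx (r : nat) (ns : seq nat) : nat := (find (fun n => n < r.-1)%N ns).+1.

Definition formula_num (b : R) (xs ys : seq nat) : R :=
  let p := size xs in let q := size ys in let r := (p + q)%N in
  let s := sidx r xs in let s' := sidx r ys in
  (\prod_(k < r) rfact (b + k.+1%:R) (r - k.+1)) *
  (\prod_(i < p | (i.+1 < s)%N) rfact (b + r%:R) ((nth 0%N xs i).+1 - r)%N) *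
  (\prod_(j < q | (j.+1 < s')%N) rfact (b + r%:R) ((nth 0%N ys j).+1 - r)%N) *
  vdm ([seq - (n%:R) | n <- rev xs] ++ [seq b + 1 + m%:R | m <- ys]).

Definition formula_den (b : R) (xs ys : seq nat) : R :=
  let p := size xs in let q := size ys in let r := (p + q)%N in
  let s := sidx r xs in let s' := sidx r ys in
  (\prod_(i < p | (s <= i.+1)%N) rfact (b + 1 + (nth 0%N xs i)%:R) (r.-1 - nth 0%N xs i)%N) *
  (\prod_(j < q | (s' <= j.+1)%N) rfact (b + 1 + (nth 0%N ys j)%:R) (r.-1 - nth 0%N ys j)%N) *
  (\prod_(i < p) (nth 0%N xs i)`!%:R) * (\prod_(j < q) (nth 0%N ys j)`!%:R).

End Defs.

(* Main.v *)
Require Import Defs.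
From HB Require Import structures.
From mathcomp Require Import all_boot all_order all_algebra.
From mathcomp Require Import all_classical all_reals all_analysis.
From mathcomp Require Import perm.
From mathcomp Require Import ring zify.
Import Order.TTheory GRing.Theory Num.Theory.
Local Open Scope ring_scope.

Set Implicit Arguments. Unset Strict Implicit. Unset Printing Implicit Defensive.

Section RF.
Variable T : comNzRingType.
Implicit Types (a b : T).

Definition rf a (n : nat) : T := \prod_(i < n) (a + i%:R).

Lemma rfS a n : rf a n.+1 = rf a n * (a + n%:R).
Proof. by rewrite /rf big_ord_recr. Qed.

Lemma rf0 a : rf a 0 = 1.
Proof. by rewrite /rf big_ord0. Qed.

Lemma rf_add a m n : rf a (m + n) = rf a m * rf (a + m%:R) n.
Proof.
elim: n => [|n IH]; first by rewrite addn0 rf0 mulr1.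
by rewrite addnS !rfS IH natrD addrA mulrA.
Qed.

Lemma rf_negn n i : rf (- n%:R) i = (-1) ^+ i * (n ^_ i)%:R.
Proof.
elim: i => [|i IH]; first by rewrite rf0 ffactn0 mulr1.
rewrite rfS IH ffactnSr natrM exprS.
have [le|lt] := leqP i n.
  by rewrite natrB //; ring.
by rewrite ffact_small // !(mul0r, mulr0).
Qed.

Lemma det_rf_vdm n (x : 'I_n -> T) :
  \det (\matrix_(i < n, j < n) rf (x j) i) =
  \prod_(i < n) \prod_(j < n | (i < j)%N) (x j - x i).
Proof.
pose P (i : nat) : {poly T} := \prod_(k < i) ('X + (k%:R)%:P).
have Pm i : P i \is monic by apply: monic_prod => k _; exact: monicXaddC.
have sP i : size (P i) = i.+1.
  elim: i => [|i IH]; first by rewrite /P big_ord0 size_poly1.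
  have -> : P i.+1 = P i * ('X + (i%:R)%:P) by rewrite /P big_ord_recr.
  rewrite size_Mmonic ?IH ?size_XaddC //; [by rewrite addn2 | exact: (monic_neq0 (Pm i)) | exact: monicXaddC].
have hP i y : (P i).[y] = rf y i.
  by rewrite /P horner_prod; apply: eq_bigr => k _; rewrite hornerD hornerX hornerC.
pose U := \matrix_(i < n, k < n) (P i)`_k.
have -> : \matrix_(i < n, j < n) rf (x j) i = U *m Vandermonde n (\row_j x j).
  apply/matrixP => i j; rewrite !mxE -hP (@horner_coef_wide _ n); last by rewrite sP.
  by apply: eq_bigr => k _; rewrite !mxE.
rewrite det_mulmx det_Vandermonde det_trig.
  rewrite big1 ?mul1r; last by move=> i _; rewrite mxE; have := monicP (Pm i); rewrite lead_coefE sP.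
  by apply: eq_bigr => i _; apply: eq_bigr => j _; rewrite !mxE.
apply/is_trig_mxP => i j lt; rewrite mxE nth_default // sP.
exact: lt.
Qed.

End RF.

Section Gen.
Variable T : comNzRingType.
Implicit Types (a b : T).

Definition colc (ns ms : seq nat) (j : nat) : nat :=
  if (j < size ns)%N then nth 0%N ns j else nth 0%N ms (j - size ns).

Definition Ae a (ns ms : seq nat) (i j : nat) : T :=
  if (j < size ns)%N then
    (-1) ^+ i * rf (a + i.+1%:R) (nth 0%N ns j - i) * ((nth 0%N ns j) ^_ i)%:R
  else rf (a + i.+1%:R) (nth 0%N ms (j - size ns)).

Definition xc a (ns ms : seq nat) (j : nat) : T :=
  if (j < size ns)%N then - (nth 0%N ns j)%:R else a + 1 + (nth 0%N ms (j - size ns))%:R.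

Lemma natS_add a i : a + i.+1%:R = a + 1 + i%:R.
Proof. by rewrite mulrS addrA. Qed.

Lemma col_key a ns ms i j :
  rf (a + 1) i * Ae a ns ms i j = rf (xc a ns ms j) i * rf (a + 1) (colc ns ms j).
Proof.
rewrite /Ae /xc /colc natS_add; case: ifP => jp.
  set n := nth 0%N ns j; rewrite rf_negn.
  have [le|lt] := leqP i n.
    have -> : rf (a + 1) n = rf (a + 1) i * rf (a + 1 + i%:R) (n - i).
      by rewrite -rf_add subnKC.
    ring.
  by rewrite ffact_small // !(mul0r, mulr0).
set m := nth 0%N ms _.
by rewrite -rf_add mulrC -rf_add addnC.
Qed.


Definition spv (p j : nat) : nat := if (j < p)%N then (p.-1 - j)%N else j.

Lemma spvK p : involutive (spv p).
Proof.
move=> j; case: (ltnP j p) => jp.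
  have h : (p.-1 - j < p)%N by case: p jp => // p' _; rewrite ltnS leq_subr.
  by rewrite /spv jp h subKn // -ltnS; case: p jp h.
by rewrite /spv !ifF // ltnNge jp.
Qed.

Lemma spv_lt p q j : (j < p + q)%N -> (spv p j < p + q)%N.
Proof.
rewrite /spv; case: ifP => // jp _.
by apply: leq_ltn_trans (leq_subr _ _) _; case: p jp => // p' _; rewrite ltnS leq_addr.
Qed.

Definition spf (p q : nat) (j : 'I_(p + q)) : 'I_(p + q) := insubd j (spv p j).
Arguments spf : clear implicits.

Lemma spf_val p q j : val (spf p q j) = spv p j.
Proof. by rewrite /spf val_insubd spv_lt. Qed.

Lemma spfK p q : involutive (spf p q).
Proof. by move=> j; apply: val_inj; rewrite !spf_val spvK. Qed.

Definition sp p q : 'S_(p + q) := perm (inv_inj (@spfK p q)).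
Arguments sp : clear implicits.

Lemma sp_val p q j : val (sp p q j) = spv p j.
Proof. by rewrite permE spf_val. Qed.

Definition Sseq a (ns ms : seq nat) : seq T :=
  [seq - (n%:R) | n <- rev ns] ++ [seq a + 1 + m%:R | m <- ms].

Lemma size_Sseq a ns ms : size (Sseq a ns ms) = (size ns + size ms)%N.
Proof. by rewrite size_cat !size_map size_rev. Qed.

Lemma Sseq_nth a ns ms j : (j < size ns + size ms)%N ->
  (Sseq a ns ms)`_j = xc a ns ms (spv (size ns) j).
Proof.
move=> jr; rewrite /Sseq nth_cat size_map size_rev /xc /spv.
case: ifP => jp.
  have -> : ((size ns).-1 - j < size ns)%N.
    by case: (size ns) jp => // p' _; rewrite ltnS leq_subr.
  rewrite (nth_map 0%N) ?size_rev // nth_rev //.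
  by have -> : (size ns - j.+1 = (size ns).-1 - j)%N by lia.
rewrite jp (nth_map 0%N) //; lia.
Qed.

Definition vdmg (s : seq T) : T :=
  \prod_(i < size s) \prod_(j < size s | (i < j)%N) (s`_j - s`_i).

Lemma vdmgE (s : seq T) n : size s = n ->
  vdmg s = \prod_(i < n) \prod_(j < n | (i < j)%N) (s`_j - s`_i).
Proof. by move<-. Qed.

Lemma matrix_identity a ns ms :
  let p := size ns in let q := size ms in
  (\prod_(i < p + q) rf (a + 1) i) *
    (\det (\matrix_(i < p + q, j < p + q) Ae a ns ms i j) * (-1) ^+ odd_perm ((sp p q)^-1)%g)
  = vdmg (Sseq a ns ms) * \prod_(j < p + q) rf (a + 1) (colc ns ms j).
Proof.
move=> p q.
set Am := \matrix_(i < p + q, j < p + q) Ae a ns ms i j.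
have E : diag_mx (\row_i rf (a + 1) i) *m col_perm (sp p q) Am =
  (\matrix_(i < p + q, j < p + q) rf ((Sseq a ns ms)`_j) i) *m
     diag_mx (\row_j rf (a + 1) (colc ns ms (sp p q j))).
  apply/matrixP => i j; rewrite mul_diag_mx mul_mx_diag !mxE col_key.
  by rewrite Sseq_nth // sp_val.
move: (congr1 determinant E); rewrite !det_mulmx !det_diag col_permE det_mulmx det_perm.
rewrite det_rf_vdm (vdmgE (size_Sseq a ns ms)).
under eq_bigr do rewrite mxE.
under [in RHS]eq_bigr do rewrite mxE.
move=> ->; congr (_ * _).
by rewrite [RHS](reindex_inj (@perm_inj _ (sp p q))).
Qed.

Lemma prod_const_ord (x : T) n : \prod_(i < n) x = x ^+ n.
Proof. by rewrite prodr_const card_ord. Qed.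

Lemma gtn_trans : transitive gtn.
Proof. by move=> y x z /= h1 h2; exact: ltn_trans h2 h1. Qed.

Lemma family a r (xs : seq nat) : sorted gtn xs -> (size xs <= r)%N ->
  (\prod_(i < size xs) rf (a + 1) (nth 0%N xs i)) *
  (\prod_(i < size xs | (sidx r xs <= i.+1)%N) rf (a + 1 + (nth 0%N xs i)%:R) (r.-1 - nth 0%N xs i))
  = rf (a + 1) r.-1 ^+ size xs *
  \prod_(i < size xs | (i.+1 < sidx r xs)%N) rf (a + r%:R) ((nth 0%N xs i).+1 - r).
Proof.
move=> so sr.
rewrite [\prod_(i < size xs | (sidx r xs <= i.+1)%N) _]big_mkcond.
rewrite [\prod_(i < size xs | (i.+1 < sidx r xs)%N) _]big_mkcond.
rewrite -big_split /= -prod_const_ord -big_split /=.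
apply: eq_bigr => i _; rewrite /sidx !ltnS.
set f := find _ xs; set n := nth 0%N xs i.
have ir : (i < r)%N := leq_trans (ltn_ord i) sr.
case: (ltnP i f) => hif.
  have := before_find 0%N hif; rewrite -/n => /negbT; rewrite -leqNgt => hn.
  have En : n = (r.-1 + (n.+1 - r))%N by lia.
  rewrite mulr1 {1}En rf_add; congr (_ * rf _ _).
  by case: (r) ir => // r' _; rewrite /= mulrS addrA.
rewrite mulr1.
have hf : (f < size xs)%N := leq_ltn_trans hif (ltn_ord i).
have hnf : (nth 0%N xs f < r.-1)%N by apply: (@nth_find _ 0%N (fun n => n < r.-1)%N); rewrite has_find.
have hn : (n < r.-1)%N.
  have [ei|lt] : f = i \/ (f < i)%N by lia.
    by rewrite /n -ei.
  have := sorted_ltn_nth gtn_trans 0%N so; move=> /(_ f i hf (ltn_ord i) lt) /= h.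
  exact: ltn_trans h hnf.
by rewrite -rf_add subnKC // ltnW.
Qed.

Lemma Klemma a r :
  (\prod_(i < r) rf (a + 1) i) * (\prod_(k < r) rf (a + k.+1%:R) (r - k.+1))
  = rf (a + 1) r.-1 ^+ r.
Proof.
rewrite -big_split -prod_const_ord /=; apply: eq_bigr => k _.
rewrite natS_add -rf_add; congr rf; have := ltn_ord k; lia.
Qed.

Definition Ng a (xs ys : seq nat) : T :=
  let p := size xs in let q := size ys in let r := (p + q)%N in
  let s := sidx r xs in let s' := sidx r ys in
  (\prod_(k < r) rf (a + k.+1%:R) (r - k.+1)) *
  (\prod_(i < p | (i.+1 < s)%N) rf (a + r%:R) ((nth 0%N xs i).+1 - r)%N) *
  (\prod_(j < q | (j.+1 < s')%N) rf (a + r%:R) ((nth 0%N ys j).+1 - r)%N) *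
  vdmg ([seq - (n%:R) | n <- rev xs] ++ [seq a + 1 + m%:R | m <- ys]).

Definition Smg a (xs ys : seq nat) : T :=
  let p := size xs in let q := size ys in let r := (p + q)%N in
  let s := sidx r xs in let s' := sidx r ys in
  (\prod_(i < p | (s <= i.+1)%N) rf (a + 1 + (nth 0%N xs i)%:R) (r.-1 - nth 0%N xs i)%N) *
  (\prod_(j < q | (s' <= j.+1)%N) rf (a + 1 + (nth 0%N ys j)%:R) (r.-1 - nth 0%N ys j)%N).

Definition sgb (p q : nat) : bool := odd_perm ((sp p q)^-1)%g.

Theorem gen_id a ns ms : sorted gtn ns -> sorted gtn ms ->
  let r := (size ns + size ms)%N in
  (\prod_(i < r) rf (a + 1) i) * (\det (\matrix_(i < r, j < r) Ae a ns ms i j) * Smg a ns ms) =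
  (\prod_(i < r) rf (a + 1) i) * ((-1) ^+ sgb (size ns) (size ms) * Ng a ns ms).
Proof.
move=> sn sm r.
have H1 := matrix_identity a ns ms. cbv zeta in H1.
rewrite [\prod_(j < _) rf (a + 1) (colc _ _ _)]big_split_ord /= in H1.
have Hn := family a sn (leq_addr (size ms) (size ns)).
have Hm := family a sm (leq_addl (size ns) (size ms)).
have HK := Klemma a r.
rewrite /Smg /Ng /= -/r.
rewrite -/r in H1 Hn Hm.
set D := \prod_(i < r) rf (a + 1) i in H1 HK *.
set dA := \det _ in H1 *.
set sg := (-1) ^+ _ in H1.
set sg' := (-1) ^+ _.
have esg : sg' = sg by [].
rewrite esg.
have sg2 : sg * sg = 1 by rewrite -expr2 sqrr_sign.
set V := vdmg _ in H1 *.
have e1 : \prod_(i < size ns) rf (a + 1) (colc ns ms (lshift (size ms) i)) =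
          \prod_(i < size ns) rf (a + 1) (nth 0%N ns i).
  by apply: eq_bigr => i _; rewrite /colc /= ltn_ord.
have e2 : \prod_(i < size ms) rf (a + 1) (colc ns ms (rshift (size ns) i)) =
          \prod_(i < size ms) rf (a + 1) (nth 0%N ms i).
  by apply: eq_bigr => i _; rewrite /colc /= ltnNge leq_addr /= addKn.
rewrite e1 e2 in H1.
set Pn := \prod_(i < size ns) _ in H1 Hn.
set Pm := \prod_(i < size ms) _ in H1 Hm.
set Sn := \prod_(i < size ns | _) _ in Hn *.
set Sm := \prod_(i < size ms | _) _ in Hm *.
set Bn := \prod_(i < size ns | _) _ in Hn *.
set Bm := \prod_(i < size ms | _) _ in Hm *.
set K := \prod_(k < r) _ in HK *.
have H1' : D * dA = sg * (V * (Pn * Pm)).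
  rewrite -H1. have -> : sg * (D * (dA * sg)) = D * dA * (sg * sg) by ring.
  by rewrite sg2 mulr1.
have -> : D * (dA * (Sn * Sm)) = (D * dA) * (Sn * Sm) by ring.
rewrite H1'.
have -> : sg * (V * (Pn * Pm)) * (Sn * Sm) = sg * V * ((Pn * Sn) * (Pm * Sm)) by ring.
rewrite Hn Hm.
have -> : D * (sg * (K * Bn * Bm * V)) = sg * V * (D * K) * Bn * Bm by ring.
rewrite HK /r exprD; ring.
Qed.

End Gen.

Section Morph.
Variables (T U : comNzRingType) (f : {rmorphism T -> U}).

Lemma rf_morph a n : f (rf a n) = rf (f a) n.
Proof. by rewrite rmorph_prod; apply: eq_bigr => i _; rewrite rmorphD rmorph_nat. Qed.

Lemma Ae_morph a ns ms i j : f (Ae a ns ms i j) = Ae (f a) ns ms i j.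
Proof.
rewrite /Ae; case: ifP => _.
  by rewrite !rmorphM rmorph_sign rf_morph rmorphD !rmorph_nat.
by rewrite rf_morph rmorphD rmorph_nat.
Qed.

Lemma vdmg_morph (s : seq T) : f (vdmg s) = vdmg (map f s).
Proof.
rewrite /vdmg size_map rmorph_prod; apply: eq_bigr => i _.
rewrite rmorph_prod; apply: eq_bigr => j _.
by rewrite rmorphB !(nth_map 0) // rmorph0.
Qed.

Lemma Ng_morph a xs ys : f (Ng a xs ys) = Ng (f a) xs ys.
Proof.
rewrite /Ng /= !rmorphM vdmg_morph !rmorph_prod map_cat -!map_comp.
congr (_ * _ * _ * vdmg (_ ++ _)).
- by apply: eq_bigr => k _; rewrite rf_morph rmorphD rmorph_nat.
- by apply: eq_bigr => k _; rewrite rf_morph rmorphD rmorph_nat.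
- by apply: eq_bigr => k _; rewrite rf_morph rmorphD rmorph_nat.
- by apply: eq_map => n /=; rewrite rmorphN rmorph_nat.
- by apply: eq_map => n /=; rewrite !rmorphD rmorph1 rmorph_nat.
Qed.

Lemma Smg_morph a xs ys : f (Smg a xs ys) = Smg (f a) xs ys.
Proof.
rewrite /Smg /= !rmorphM !rmorph_prod; congr (_ * _);
  by apply: eq_bigr => k _; rewrite rf_morph !rmorphD rmorph1 rmorph_nat.
Qed.

End Morph.

Theorem alg_main (R : idomainType) (alpha : R) ns ms :
  sorted gtn ns -> sorted gtn ms ->
  let r := (size ns + size ms)%N in
  \det (\matrix_(i < r, j < r) Ae alpha ns ms i j) * Smg alpha ns ms =
  (-1) ^+ sgb (size ns) (size ms) * Ng alpha ns ms.
Proof.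
move=> sn sm r.
have := gen_id ('X : {poly R}) sn sm; rewrite -/r.
move/mulfI => H.
have {}H := H _.
have nz : \prod_(i < r) rf ('X + 1 : {poly R}) i != 0.
  apply/prodf_neq0 => i _; apply/prodf_neq0 => k _.
  have -> : ('X + 1 + k%:R : {poly R}) = 'X + ((1 + k%:R : R))%:P.
    by rewrite rmorphD rmorph1 rmorph_nat addrA.
  exact: monic_neq0 (monicXaddC _).
move: (H nz) => /(congr1 (horner_eval alpha)) E.
have hx : horner_eval alpha 'X = alpha by rewrite horner_evalE hornerX.
rewrite rmorphM [X in _ = X]rmorphM rmorph_sign Smg_morph Ng_morph in E.
rewrite [X in Smg X]/= [X in Ng X]/= horner_evalE hornerX in E.
rewrite -E -det_map_mx; congr (\det _ * _).
by apply/matrixP => i j; rewrite !mxE Ae_morph /= horner_evalE hornerX.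
Qed.

Section B.
Variable R : realType.

Lemma derive1n_horner (p : {poly R}) i : derive1n i (horner p) = horner (p^`(i)).
Proof.
elim: i => [|i IH]; first by rewrite derive1n0 derivn0.
by rewrite derive1nS IH derivnS derivE.
Qed.

Definition Ef (p : {poly R}) : R -> R := fun y => expR y * p.[y].

Lemma derive1_Ef p : derive1 (Ef p) = Ef (p + p^`()).
Proof.
apply/funext => y.
have -> : Ef p = (expR * horner p)%R by [].
rewrite derive1E deriveM; [|exact: derivable_expR|exact: derivable_horner].
rewrite -derive1E -derivE.
have -> : 'D_1 expR y = expR y by have := congr1 (fun f => f y) (@derive_expR R).
by rewrite /Ef hornerD /GRing.scale /=; ring.
Qed.

Lemma rfactE (a : R) n : rfact a n = rf a n.
Proof. by []. Qed.

Lemma rf_key (c : R) N : rf (c + 1) N.+1 = rf c N.+1 + N.+1%:R * rf (c + 1) N.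
Proof.
have -> : rf c N.+1 = c * rf (c + 1) N.
  by rewrite -add1n rf_add rfS rf0 mul1r addr0.
rewrite rfS -natr1; ring.
Qed.

Lemma natr_neq0 n : (n.+1%:R : R) != 0.
Proof. by rewrite pnatr_eq0. Qed.

Lemma fact_neq0 n : (n`!%:R : R) != 0.
Proof. by rewrite pnatr_eq0 -lt0n fact_gt0. Qed.

Lemma lag_shift m (b : R) : laguerre m (b + 1) = laguerre m b - (laguerre m b)^`().
Proof.
apply/polyP => k; rewrite coefB coef_deriv !coef_poly !rfactE.
case: (ltngtP k m) => hk.
- rewrite ltnS ltnW // ltnS hk.
  have -> : (m - k = (m - k.+1).+1)%N by lia.
  set N := (m - k.+1)%N.
  set c := b + k.+1%:R.
  have -> : b + 1 + k.+1%:R = c + 1 by rewrite /c; ring.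
  have -> : b + k.+2%:R = c + 1 by rewrite /c -natr1; ring.
  rewrite rf_key !factS !natrM exprS.
  have h1 := natr_neq0 N; have h2 := natr_neq0 k; have h3 := fact_neq0 N; have h4 := fact_neq0 k.
  rewrite -mulr_natr.
  field.
  by rewrite h4 h3 -!mulrS h1 h2.
- have h1 : (k < m.+1)%N = false by apply/negbTE; rewrite -leqNgt.
  have h2 : (k.+1 < m.+1)%N = false by apply/negbTE; rewrite -leqNgt ltnW.
  by rewrite h1 h2 mul0rn subr0.
- by rewrite hk ltnSn ltnn mul0rn subr0 subnn /rf !big_ord0.
Qed.

Lemma lagE_fun m (b : R) :
  (fun y => expR y * (laguerre m b).[- y]) = Ef (laguerre m b \Po (- 'X)).
Proof. by apply/funext => y; rewrite /Ef horner_comp hornerN hornerX. Qed.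

Lemma comp_shift m (b : R) :
  (laguerre m b \Po (- 'X)) + (laguerre m b \Po (- 'X))^`() = laguerre m (b + 1) \Po (- 'X).
Proof.
by rewrite deriv_comp derivN derivX lag_shift comp_polyB mulrN1.
Qed.

Lemma derive1n_lagE m (b : R) i :
  derive1n i (fun y => expR y * (laguerre m b).[- y]) =
  (fun y => expR y * (laguerre m (b + i%:R)).[- y]).
Proof.
elim: i => [|i IH]; first by rewrite derive1n0 addr0.
rewrite derive1nS IH !lagE_fun derive1_Ef comp_shift.
by rewrite -natr1 addrA.
Qed.

End B.

Section B2.
Variable R : realType.

Definition fsP (a : R) (ns ms : seq nat) : seq (R -> R) :=
  [seq (fun y : R => (laguerre n a).[y]) | n <- ns] ++
  [seq (fun y : R => expR y * (laguerre m a).[- y]) | m <- ms].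

Definition Pm (a : R) (ns ms : seq nat) : 'M[{poly R}]_(size ns + size ms) :=
  \matrix_(i, j) (if (j < size ns)%N then (laguerre (nth 0%N ns j) a)^`(i)
                  else laguerre (nth 0%N ms (j - size ns)) (a + i%:R) \Po (- 'X)).

Lemma wronskianE (fs : seq (R -> R)) n x : size fs = n ->
  wronskian fs x = \det (\matrix_(i < n, j < n) derive1n i (nth (fun=> 0) fs j) x).
Proof. by move<-. Qed.

Lemma wr_fsP a ns ms x :
  wronskian (fsP a ns ms) x = (\det (Pm a ns ms)).[x] * expR x ^+ size ms.
Proof.
rewrite (@wronskianE _ (size ns + size ms)); last by rewrite size_cat !size_map.
have -> : \matrix_(i < size ns + size ms, j < size ns + size ms)
    derive1n i (nth (fun=> 0) (fsP a ns ms) j) x =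
  map_mx (horner_eval x) (Pm a ns ms) *m
    diag_mx (\row_(j < size ns + size ms) (if (j < size ns)%N then 1 else expR x)).
  apply/matrixP => i j; rewrite mul_mx_diag !mxE /fsP nth_cat size_map.
  case: ifP => jp.
    rewrite (nth_map 0%N) //.
    have -> : (fun y : R => (laguerre (nth 0%N ns j) a).[y]) = horner (laguerre (nth 0%N ns j) a) by [].
    by rewrite derive1n_horner mulr1 /= horner_evalE.
  rewrite (nth_map 0%N); last by have := ltn_ord j; move/negbT: jp; rewrite -leqNgt; lia.
  rewrite derive1n_lagE /= horner_evalE horner_comp hornerN hornerX mulrC.
  done.
rewrite det_mulmx det_map_mx det_diag /= horner_evalE; congr (_ * _).
rewrite big_split_ord /= big1 ?mul1r; last by move=> i _; rewrite mxE /= ltn_ord.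
rewrite -prod_const_ord; apply: eq_bigr => i _; rewrite mxE /=.
by rewrite ltnNge leq_addr.
Qed.

Lemma wrP_poly a ns ms x : wrP a ns ms x = (\det (Pm a ns ms)).[x].
Proof.
rewrite /wrP -/(fsP a ns ms) wr_fsP expRN expRM_natl mulrCA mulVf ?mulr1 //.
by rewrite expf_neq0 // gt_eqF // expR_gt0.
Qed.

End B2.

Section B3.
Variable R : realType.

Lemma Ae_Pm0 (a : R) ns ms (i j : 'I_(size ns + size ms)) :
  Ae a ns ms i j = (Pm a ns ms i j).[0] * ((colc ns ms j)`!)%:R.
Proof.
rewrite mxE /Ae /colc; case: ifP => jp.
  set n := nth 0%N ns j.
  rewrite horner_coef0 coef_derivn addn0 ffactnn coef_poly rfactE.
  case: (leqP i n) => hi.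
    rewrite ltnS hi -(ffact_fact hi) natrM -mulr_natr.
    have h1 := fact_neq0 R (n - i); have h2 := fact_neq0 R i.
    by field; rewrite h1 h2.
  by rewrite ltnNge hi /= ffact_small // mul0rn !mul0r mulr0.
rewrite horner_comp hornerN hornerX oppr0 horner_coef0 coef_poly /= rfactE.
rewrite subn0 fact0 expr0 mul1r mulr1 natS_add.
have h1 := fact_neq0 R (nth 0%N ms (j - size ns)).
by rewrite divfK // addrAC.
Qed.

Lemma partI_key (a : R) ns ms : sorted gtn ns -> sorted gtn ms ->
  (\det (Pm a ns ms)).[0] * formula_den a ns ms =
  (-1) ^+ sgb (size ns) (size ms) * formula_num a ns ms.
Proof.
move=> sn sm.
have E := alg_main a sn sm; cbv zeta in E; move: E.
have -> : \matrix_(i < size ns + size ms, j < size ns + size ms) Ae a ns ms i j =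
  map_mx (horner_eval 0) (Pm a ns ms) *m diag_mx (\row_j ((colc ns ms j)`!)%:R).
  by apply/matrixP => i j; rewrite mul_mx_diag [LHS]mxE Ae_Pm0 !mxE /= horner_evalE.
rewrite det_mulmx det_map_mx det_diag /= horner_evalE.
rewrite big_split_ord /=.
have -> : formula_den a ns ms = Smg a ns ms *
   ((\prod_(i < size ns) ((nth 0%N ns i)`!)%:R) * (\prod_(j < size ms) ((nth 0%N ms j)`!)%:R)).
  by rewrite /formula_den /Smg /= -mulrA.
have -> : formula_num a ns ms = Ng a ns ms by [].
move=> <-.
have -> : \prod_(i < size ns) (\row_j ((colc ns ms j)`!)%:R) 0 (lshift (size ms) i) =
          \prod_(i < size ns) ((nth 0%N ns i)`!)%:R :> R.
  by apply: eq_bigr => i _; rewrite mxE /colc /= ltn_ord.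
have -> : \prod_(i < size ms) (\row_j ((colc ns ms j)`!)%:R) 0 (rshift (size ns) i) =
          \prod_(i < size ms) ((nth 0%N ms i)`!)%:R :> R.
  by apply: eq_bigr => i _; rewrite mxE /colc /= ltnNge leq_addr /= addKn.
ring.
Qed.

End B3.

Lemma pascal (T : comNzRingType) (G F : nat -> T) i :
  \sum_(k < i.+1) 'C(i, k)%:R * (G (i - k).+1 * F k + G (i - k)%N * F k.+1) =
  \sum_(k < i.+2) 'C(i.+1, k)%:R * G (i.+1 - k)%N * F k.
Proof.
rewrite [RHS]big_ord_recl /= subn0 bin0.
under [X in _ = _ + X]eq_bigr do rewrite binS natrD subSS.
under eq_bigr do rewrite mulrDr.
rewrite big_split /=.
under [X in _ = _ + X]eq_bigr do rewrite mulrDl mulrDl.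
rewrite [X in _ = _ + X]big_split /= addrA; congr (_ + _); last first.
  by apply: eq_bigr => k _; rewrite mulrA.
rewrite big_ord_recl /= subn0 bin0 [X in _ = _ + X]big_ord_recr /= bin_small // mul0r mul0r addr0.
congr (_ + _); first by rewrite mulrA.
apply: eq_bigr => k _; rewrite /bump /= add1n mulrA.
by have -> : ((i - k.+1).+1 = i - k)%N by have := ltn_ord k; lia.
Qed.

Section B4.
Variable R : realType.

Lemma dprod3 (c : R) (u w : R -> R) y : derivable u y 1 -> derivable w y 1 ->
  'D_1 (fun z => c * u z * w z) y = c * ('D_1 u y * w y + u y * 'D_1 w y).
Proof.
move=> du dw.
have -> : (fun z => c * u z * w z) = ((cst c * u) * w)%R by [].
have dcu : derivable (cst c * u)%R y 1 by apply: derivableM => //; exact: derivable_cst.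
rewrite deriveM // deriveM //.
rewrite derive_cst scaler0 addr0 /GRing.scale /=.
rewrite -[(cst c * u)%R y]/(c * u y); ring.
Qed.

Lemma derivable_prod3 (c : R) (u w : R -> R) y : derivable u y 1 -> derivable w y 1 ->
  derivable (fun z => c * u z * w z) y 1.
Proof.
move=> du dw.
have -> : (fun z => c * u z * w z) = ((cst c * u) * w)%R by [].
by apply: derivableM => //; apply: derivableM => //; exact: derivable_cst.
Qed.

Lemma leibniz (g f : R -> R) :
  (forall k y, 0 < y -> derivable (derive1n k g) y 1) ->
  (forall k y, 0 < y -> derivable (derive1n k f) y 1) ->
  forall i y, 0 < y ->
  derive1n i (fun z => g z * f z) y =
  \sum_(k < i.+1) 'C(i, k)%:R * derive1n (i - k) g y * derive1n k f y.
Proof.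
move=> Hg Hf; elim => [|i IH] y y0.
  by rewrite big_ord1 /= bin0 mul1r.
rewrite derive1nS derive1E.
rewrite (@near_eq_derive _ _ _ _ (fun z => \sum_(k < i.+1) 'C(i, k)%:R * derive1n (i - k) g z * derive1n k f z)); last first.
  near=> z; rewrite IH //; near: z; exact: lt_nbhsr.
have -> : (fun z => \sum_(k < i.+1) 'C(i, k)%:R * derive1n (i - k) g z * derive1n k f z) =
  \sum_(k < i.+1) (fun z => 'C(i, k)%:R * derive1n (i - k) g z * derive1n k f z).
  by rewrite fct_sumE.
rewrite derive_sum; last by move=> k; apply: derivable_prod3; [exact: Hg | exact: Hf].
under eq_bigr => k _ do rewrite (dprod3 _ (Hg _ _ y0) (Hf _ _ y0)).
under eq_bigr => k _ do rewrite -!derive1E -!derive1nS.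
exact: (pascal (fun m => derive1n m g y) (fun k => derive1n k f y) i).
Unshelve. all: by end_near.
Qed.

End B4.

Section B5.
Variable R : realType.

Lemma powR_derivn (b : R) k : forall y, 0 < y ->
  derive1n k (fun z => z `^ b) y = (\prod_(l < k) (b - l%:R)) * y `^ (b - k%:R).
Proof.
elim: k => [|k IH] y y0; first by rewrite big_ord0 mul1r subr0.
rewrite derive1nS derive1E.
rewrite (@near_eq_derive _ _ _ _ (fun z => (\prod_(l < k) (b - l%:R)) * z `^ (b - k%:R))); last first.
  near=> z; rewrite IH //; near: z; exact: lt_nbhsr.
rewrite deriveMl; last by apply: derivable_powR; rewrite in_itv /= y0.
rewrite -derive1E powR_derive1; last by rewrite in_itv /= y0.
rewrite big_ord_recr /= -natr1 opprD addrA; ring.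
Unshelve. all: by end_near.
Qed.

Lemma powR_smooth (b : R) k y : 0 < y -> derivable (derive1n k (fun z => z `^ b)) y 1.
Proof.
move=> y0.
apply: (@near_eq_derivable _ _ _ (fun z => (\prod_(l < k) (b - l%:R)) * z `^ (b - k%:R))).
  near=> z; rewrite powR_derivn //; near: z; exact: lt_nbhsr.
have -> : (fun z => (\prod_(l < k) (b - l%:R)) * z `^ (b - k%:R)) =
   (cst (\prod_(l < k) (b - l%:R)) * (fun z => z `^ (b - k%:R)))%R by [].
apply: derivableM; first exact: derivable_cst.
by apply: derivable_powR; rewrite in_itv /= y0.
Unshelve. all: by end_near.
Qed.

Lemma fsP_smooth (a : R) ns ms j : (j < size (fsP a ns ms))%N ->
  forall k y, derivable (derive1n k (nth (fun=> 0) (fsP a ns ms) j)) y 1.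
Proof.
rewrite size_cat !size_map => jr k y; rewrite /fsP nth_cat size_map.
case: ifP => jp.
  rewrite (nth_map 0%N) //.
  have -> : (fun y : R => (laguerre (nth 0%N ns j) a).[y]) = horner (laguerre (nth 0%N ns j) a) by [].
  rewrite derive1n_horner; exact: derivable_horner.
rewrite (nth_map 0%N); last by move/negbT: jp; rewrite -leqNgt; lia.
rewrite derive1n_lagE lagE_fun.
have -> : forall q : {poly R}, Ef q = (expR * horner q)%R by [].
apply: derivableM; [exact: derivable_expR | exact: derivable_horner].
Qed.

Lemma wr_mul (g : R -> R) (fs : seq (R -> R)) x : 0 < x ->
  (forall k y, 0 < y -> derivable (derive1n k g) y 1) ->
  (forall j, (j < size fs)%N -> forall k y, 0 < y -> derivable (derive1n k (nth (fun=> 0) fs j)) y 1) ->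
  wronskian [seq (fun y => g y * f y) | f <- fs] x = g x ^+ size fs * wronskian fs x.
Proof.
move=> x0 Hg Hf.
rewrite (@wronskianE _ _ (size fs)) ?size_map // (@wronskianE _ fs (size fs)) //.
set n := size fs.
have -> : \matrix_(i < n, j < n) derive1n i (nth (fun=> 0) [seq (fun y => g y * f y) | f <- fs] j) x =
   (\matrix_(i < n, k < n) ('C(i, k)%:R * derive1n (i - k) g x)) *m
   \matrix_(i < n, j < n) derive1n i (nth (fun=> 0) fs j) x.
  apply/matrixP => i j; rewrite !mxE (nth_map (fun=> 0)) //.
  rewrite leibniz //; last exact: Hf.
  under [RHS]eq_bigr do rewrite !mxE.
  rewrite (big_ord_widen n (fun k => 'C(i, k)%:R * derive1n (i - k) g x * derive1n k (nth (fun=> 0) fs j) x)) //.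
  rewrite big_mkcond /=; apply: eq_bigr => k _.
  case: ifP => // /negbT; rewrite -leqNgt => hk.
  by rewrite bin_small // mulr0n !mul0r.
rewrite det_mulmx det_trig; last first.
  by apply/is_trig_mxP => i k lt; rewrite mxE (bin_small lt); exact: mul0r.
congr (_ * _); rewrite -prod_const_ord; apply: eq_bigr => i _.
by rewrite mxE binn subnn mul1r.
Qed.

Lemma wrQ_wrP (a : R) ns ms x : 0 < x -> wrQ a ns ms x = wrP (- a) ms ns x.
Proof.
move=> x0; rewrite /wrQ /wrP.
have -> : [seq (fun y : R => y `^ (- a) * (laguerre m (- a)).[y]) | m <- ms] ++
          [seq (fun y : R => expR y * y `^ (- a) * (laguerre n (- a)).[- y]) | n <- ns] =
          [seq (fun y => y `^ (- a) * f y) | f <- fsP (- a) ms ns].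
  rewrite /fsP map_cat -!map_comp; congr (_ ++ _); apply: eq_map => n /=;
    apply/funext => y /=; ring.
rewrite -/(fsP (- a) ms ns) wr_mul //; last first.
- by move=> j jr k y _; exact: fsP_smooth.
- by move=> k y y0; exact: powR_smooth.
have -> : size (fsP (- a) ms ns) = (size ns + size ms)%N by rewrite size_cat !size_map addnC.
set r := (size ns + size ms)%N.
have e : x `^ (a * r%:R) * x `^ (- a) ^+ r = 1.
  rewrite -powR_mulrn ?powR_ge0 // -powRrM -powRD; last by rewrite (gt_eqF x0) implybT.
  by rewrite mulNr addrN powRr0.
rewrite mulrA -[_ * x `^ (a * _) * _]mulrA e mulr1.
by [].
Qed.

End B5.


Unset Implicit Arguments. Set Strict Implicit. Set Printing Implicit Defensive.

Theorem corollary6p3 (R : realType) (alpha : R) :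
  (* (i) *)
  (forall ns ms : seq nat, sorted gtn ns -> sorted gtn ms ->
     formula_den alpha ns ms != 0 ->
     exists eps : R, (eps = 1 \/ eps = -1) /\
       wrP alpha ns ms 0 = eps * formula_num alpha ns ms / formula_den alpha ns ms) /\
  (* (ii) *)
  (forall ns' ms' : seq nat, sorted gtn ns' -> sorted gtn ms' ->
     exists Q : {poly R},
       (forall x : R, 0 < x -> wrQ alpha ns' ms' x = Q.[x]) /\
       (formula_den (- alpha) ms' ns' != 0 ->
        exists eps : R, (eps = 1 \/ eps = -1) /\
          Q.[0] = eps * formula_num (- alpha) ms' ns' / formula_den (- alpha) ms' ns')).
Proof.
split.
  move=> ns ms sn sm dn.
  exists ((-1) ^+ sgb (size ns) (size ms)); split.
    by case: sgb; [right; rewrite expr1 | left; rewrite expr0].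
  by rewrite wrP_poly -(partI_key alpha sn sm) mulfK.
move=> ns ms sn sm.
exists (\det (Pm (- alpha) ms ns)); split.
  by move=> x x0; rewrite wrQ_wrP // wrP_poly.
move=> dn.
exists ((-1) ^+ sgb (size ms) (size ns)); split.
  by case: sgb; [right; rewrite expr1 | left; rewrite expr0].
by rewrite -(partI_key (- alpha) sm sn) mulfK.
Qed.
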